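(* Let $\star\in\{T,L,R\}$ and suppose that a pair $(\mathfrak m,\mathfrak m^* )$ of complex-valued functions on the edges of the subgraph $S^\star$ is ICSH and has ICRBV (in $S^\star$). Then $$\int_{\gamma^\star_y}\big(\mathfrak m(z)\hat\psi(z)\,dz+\mathfrak m^*(z)\hat\psi^*(z)\,d\bar z\big)=\int_{\gamma^\star_0}\big(\mathfrak m(z)\hat\psi(z)\,dz+\mathfrak m^*(z)\hat\psi^*(z)\,d\bar z\big)$$ for every $y\in\mathbb Z_{\ge0}$ if $\star=T$, and for every $y\in\mathbb Z_{\le0}$ if $\star\in\{L,R\}$.
   Context: Fix integers $a<0<b$, $C=\{a,\dots,b\}$, $C^*=\{a+\frac12,\dots,b-\frac12\}$. $\tilde V$ has orthonormal basis $(e_\rho)_{\rho\in\{\pm1\}^C}$; for $x'\in C^*$, $\varsigma_{x'}(\rho)$ flips signs of $\rho_x$, $x<x'$; $\psi_{x'}e_\rho=\frac{-\rho_{x'-1/2}+i\rho_{x'+1/2}}{\sqrt2}e_{\varsigma_{x'}(\rho)}$, $\psi^*_{x'}e_\rho=\frac{-i\rho_{x'-1/2}+\rho_{x'+1/2}}{\sqrt2}e_{\varsigma_{x'}(\rho)}$; $\mathrm{CliffGen}$ is their span. With $\beta=\frac12\log(\sqrt2+1)$: $T_h^{1/2}$ diagonal with entries $\exp(\frac\beta2\sum_{x=a}^{b-1}\rho_x\rho_{x+1})$; $e_\tau^\dagger T_ve_\rho=\exp(\beta\sum_x\rho_x\tau_x)\delta_{\tau_a\rho_a}\delta_{\tau_b\rho_b}$;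 $e_\tau^\dagger T^{slit}_ve_\rho=\exp(\beta\sum_x\rho_x\tau_x)\delta_{\tau_a\rho_a}\delta_{\tau_0\rho_0}\delta_{\tau_b\rho_b}$; $T=T_h^{1/2}T_vT_h^{1/2}$, $T^{slit}=T_h^{1/2}T^{slit}_vT_h^{1/2}$. The lattice slit-strip is the multigraph with vertices $C\times\mathbb Z\subset\mathbb C$, nearest-neighbour edges (identified with midpoints), with each edge between $-iy$ and $-i(y+1)$ ($y\ge0$) doubled into a left-side ($0^-$) and right-side ($0^+$) copy; faces adjacent to the slit use the copy on their side. Its subgraphs are $S^T=\{a,\dots,b\}\times\mathbb Z_{\ge0}$, $S^L=\{a,\dots,0\}\times\mathbb Z_{\le0}$, $S^R=\{0,\dots,b\}\times\mathbb Z_{\le0}$ with the corresponding edges of the slit-strip. Left boundary edges: vertical edges on $x=a$ and right-side slit edges; right boundary edges: vertical edges on $x=b$ and left-side slit edges. The fermions $\hat\psi,\hat\psi^*$ are the unique functions from the edges of the slit-strip to $\mathrm{CliffGen}$ with $\hat\psi(x'+iy)=T^{-y}\psi_{x'}T^y$, $\hat\psi^*(x'+iy)=T^{-y}\psi^*_{x'}T^y$, $\hat\psi(x'-iy)=(T^{slit})^y\psi_{x'}(T^{slit})^{-y}$, $\hat\psi^*(x'-iy)=(T^{slit})^y\psi^*_{x'}(T^{slit})^{-y}$ ($y\ge0$) on horizontal edges and satisfying: for edges $z_1,z_2$ adjacent to a common vertex $v$ and face $p$, $\hat\psi(z_1)+\frac{i|v-p|}{v-p}\hat\psi^*(z_1)=\hat\psi(z_2)+\frac{i|v-p|}{v-p}\hat\psi^*(z_2)$;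 $\hat\psi(L)+i\hat\psi^*(L)=0$ and $\hat\psi(R)-i\hat\psi^*(R)=0$ on left/right boundary edges. Contours: $\gamma^T_y=(a+iy,\dots,b+iy)$ ($y\ge0$), $\gamma^L_y=(a+iy,\dots,0+iy)$, $\gamma^R_y=(0+iy,\dots,b+iy)$ ($y\le0$); integrals: $\int(\mathfrak m\hat\psi\,dz+\mathfrak m^*\hat\psi^*\,d\bar z)=\sum_j(\mathfrak m(z_j)\hat\psi(z_j)(w_j-w_{j-1})+\mathfrak m^*(z_j)\hat\psi^*(z_j)\overline{(w_j-w_{j-1})})$ over consecutive vertices $w_{j-1},w_j$ with joining edge $z_j$. ICSH in $S^\star$: for edges $z_1,z_2$ of $S^\star$ adjacent to a common vertex $v$ and face $p$ of $S^\star$, $\mathfrak m(z_1)-\frac{i|v-p|}{v-p}\mathfrak m^*(z_1)=\mathfrak m(z_2)-\frac{i|v-p|}{v-p}\mathfrak m^*(z_2)$. ICRBV in $S^\star$: $\mathfrak m(L)-i\mathfrak m^*(L)=0$ and $\mathfrak m(R)+i\mathfrak m^*(R)=0$ for all left/right boundary edges $L,R$ of $S^\star$ (for $S^L$ the right boundary is the left side of the slit, for $S^R$ the left boundary is the right side of the slit). *)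

(* Defs.v *)
From HB Require Import structures.
From mathcomp Require Import all_boot all_order all_algebra.
From mathcomp Require Import all_classical all_reals all_analysis.
From mathcomp.real_closed Require Import complex.
Set Implicit Arguments. Unset Strict Implicit. Unset Printing Implicit Defensive.
Import Order.TTheory GRing.Theory Num.Theory.
Local Open Scope ring_scope.
Local Open Scope complex_scope.

(* Edges of the lattice slit-strip (vertices C x Z, C = {a,...,b}).          *)
(*  EH x y      : horizontal edge between x+iy and (x+1)+iy (a <= x < b);    *)
(*                its midpoint is x' + iy with x' = x + 1/2 in C^*.          *)
(*  EV x y      : vertical edge between x+iy and x+i(y+1) (a <= x <= b),     *)
(*                not used for x = 0, y < 0 (the slit).                      *)
(*  ESl s y     : slit edge between 0+iy and 0+i(y+1), y < 0 (i.e. between   *)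
(*                -iy' and -i(y'+1) with y' = -y-1 >= 0); s = false is the   *)
(*                left-side copy 0^-, s = true the right-side copy 0^+.      *)
Inductive edge : Type :=
| EH of int & int
| EV of int & int
| ESl of bool & int.

Inductive star : Type := ST | SL | SR.

Section SlitStrip.
Variable R : realType.
Variables a b : int.

(* number of sites of C minus one; sites are a + k, k < nC.+1 *)
Definition nC : nat := `|b - a|%N.

(* spin configurations rho in {+-1}^C, encoded as booleans (true = +1) *)
Definition Spin : finType := {ffun 'I_nC.+1 -> bool}.

Definition spin (rho : Spin) (x : int) : R :=
  if (a <= x <= b) then (if rho (inord `|x - a|) then 1 else -1) else 0.

Definition spinC (rho : Spin) (x : int) : R[i] := (spin rho x)%:C.

(* varsigma_{x'} for x' = k + 1/2 : flips rho_x for all x < x', i.e. x <= k *)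
Definition flip (k : int) (rho : Spin) : Spin :=
  [ffun i : 'I_nC.+1 => if a + (i : nat)%:Z <= k then ~~ rho i else rho i].

(* operators on tilde V, as matrices in the orthonormal basis (e_rho);
   the (tau, rho) entry is e_tau^dagger A e_rho *)
Definition Dim : nat := #|{: Spin}|.
Definition Mat := 'M[R[i]]_Dim.

Definition mk_op (F : Spin -> Spin -> R[i]) : Mat :=
  \matrix_(i < Dim, j < Dim) F (enum_val i) (enum_val j).

Definition sqrt2C : R[i] := (Num.sqrt (2 : R))%:C.

(* psi_{x'} and psi^*_{x'} for x' = k + 1/2 *)
Definition psi (k : int) : Mat :=
  mk_op (fun tau rho => if tau == flip k rho
           then (- spinC rho k + 'i * spinC rho (k + 1)) / sqrt2C else 0).

Definition psis (k : int) : Mat :=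
  mk_op (fun tau rho => if tau == flip k rho
           then (- 'i * spinC rho k + spinC rho (k + 1)) / sqrt2C else 0).

Definition in_CliffGen (A : Mat) : Prop :=
  exists c d : 'I_nC -> R[i],
    A = \sum_(k < nC) (c k *: psi (a + (k : nat)%:Z) + d k *: psis (a + (k : nat)%:Z)).

Definition beta : R := ln (Num.sqrt 2 + 1) / 2.

Definition Th_half : Mat :=
  mk_op (fun tau rho => if tau == rho then
     (expR (beta / 2 * \sum_(k < nC) spin rho (a + (k : nat)%:Z) * spin rho (a + (k : nat)%:Z + 1)))%:C
     else 0).

Definition Tv : Mat :=
  mk_op (fun tau rho =>
     if (spin tau a == spin rho a) && (spin tau b == spin rho b) then
       (expR (beta * \sum_(k < nC.+1) spin rho (a + (k : nat)%:Z) * spin tau (a + (k : nat)%:Z)))%:C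
     else 0).

Definition Tv_slit : Mat :=
  mk_op (fun tau rho =>
     if [&& spin tau a == spin rho a, spin tau 0 == spin rho 0 & spin tau b == spin rho b] then
       (expR (beta * \sum_(k < nC.+1) spin rho (a + (k : nat)%:Z) * spin tau (a + (k : nat)%:Z)))%:C
     else 0).

Definition Ttr : Mat := Th_half *m Tv *m Th_half.
Definition Ttr_slit : Mat := Th_half *m Tv_slit *m Th_half.

Definition cpt (x y : R) : R[i] := x +i* y.
Definition vtx (v : int * int) : R[i] := cpt (v.1)%:~R (v.2)%:~R.

Definition valid_edge (z : edge) : bool :=
  match z with
  | EH x y => (a <= x) && (x < b)
  | EV x y => (a <= x <= b) && ~~ ((x == 0) && (y < 0))
  | ESl _ y => y < 0
  end.

(* faces: unit squares with lower-left corner x+iy, a <= x < b.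
   The vertical side of the face (x,y) on the left (right = false) or on the
   right (right = true); faces adjacent to the slit use the copy on their side *)
Definition face_vedge (x y : int) (right : bool) : edge :=
  let xe := if right then x + 1 else x in
  if (xe == 0) && (y < 0) then ESl (~~ right) y else EV xe y.

Definition face_hedge (x y : int) (top : bool) : edge := EH x (y + top%:Z).

Definition cfac (x y : int) (dx dy : bool) : R[i] :=
  let v := vtx (x + dx%:Z, y + dy%:Z) in
  let p := cpt (x%:~R + 1 / 2) (y%:~R + 1 / 2) in
  'i * `|v - p| / (v - p).

Definition hor_value (P : int -> Mat) (x y : int) : Mat :=
  if 0 <= y then (invmx Ttr) ^+ `|y| *m P x *m Ttr ^+ `|y|
  else Ttr_slit ^+ `|y| *m P x *m (invmx Ttr_slit) ^+ `|y|.

Definition is_fermion_pair (Psi Psis : edge -> Mat) : Prop :=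
  [/\ (forall z, valid_edge z -> in_CliffGen (Psi z) /\ in_CliffGen (Psis z)),
      (forall x y, a <= x < b ->
         Psi (EH x y) = hor_value psi x y /\ Psis (EH x y) = hor_value psis x y),
      (forall x y (dx dy : bool), a <= x < b ->
         let z1 := face_hedge x y dy in
         let z2 := face_vedge x y dx in
         let c := cfac x y dx dy in
         Psi z1 + c *: Psis z1 = Psi z2 + c *: Psis z2),
      (* left boundary edges: vertical edges on x = a, right-side slit edges *)
      (forall y, Psi (EV a y) + 'i *: Psis (EV a y) = 0) /\
      (forall y, y < 0 -> Psi (ESl true y) + 'i *: Psis (ESl true y) = 0) &
      (* right boundary edges: vertical edges on x = b, left-side slit edges *)
      (forall y, Psi (EV b y) - 'i *: Psis (EV b y) = 0) /\
      (forall y, y < 0 -> Psi (ESl false y) - 'i *: Psis (ESl false y) = 0)].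

Definition inS (st : star) (z : edge) : bool :=
  match st, z with
  | ST, EH x y => (a <= x < b) && (0 <= y)
  | ST, EV x y => (a <= x <= b) && (0 <= y)
  | ST, ESl _ _ => false
  | SL, EH x y => (a <= x < 0) && (y <= 0)
  | SL, EV x y => (a <= x < 0) && (y < 0)
  | SL, ESl s y => ~~ s && (y < 0)
  | SR, EH x y => (0 <= x < b) && (y <= 0)
  | SR, EV x y => (0 < x <= b) && (y < 0)
  | SR, ESl s y => s && (y < 0)
  end.

Definition faceS (st : star) (x y : int) : bool :=
  match st with
  | ST => (a <= x < b) && (0 <= y)
  | SL => (a <= x < 0) && (y < 0)
  | SR => (0 <= x < b) && (y < 0)
  end.

Definition left_bdry (st : star) (z : edge) : bool :=
  match st, z with
  | ST, EV x y => (x == a) && (0 <= y)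
  | SL, EV x y => (x == a) && (y < 0)
  | SR, ESl s y => s && (y < 0)
  | _, _ => false
  end.

Definition right_bdry (st : star) (z : edge) : bool :=
  match st, z with
  | ST, EV x y => (x == b) && (0 <= y)
  | SL, ESl s y => ~~ s && (y < 0)
  | SR, EV x y => (x == b) && (y < 0)
  | _, _ => false
  end.

Definition ICSH (st : star) (m ms : edge -> R[i]) : Prop :=
  forall x y (dx dy : bool), faceS st x y ->
    let z1 := face_hedge x y dy in
    let z2 := face_vedge x y dx in
    let c := cfac x y dx dy in
    inS st z1 -> inS st z2 ->
    m z1 - c * ms z1 = m z2 - c * ms z2.

Definition ICRBV (st : star) (m ms : edge -> R[i]) : Prop :=
  (forall z, left_bdry st z -> m z - 'i * ms z = 0) /\
  (forall z, right_bdry st z -> m z + 'i * ms z = 0).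

(* a contour: list of (joining edge z_j, vertex w_{j-1}, vertex w_j) *)
Definition contour_integral (m ms : edge -> R[i]) (Psi Psis : edge -> Mat)
    (g : seq (edge * (int * int) * (int * int))) : Mat :=
  \sum_(t <- g)
    let: (z, w0, w1) := t in
    ((m z * (vtx w1 - vtx w0)) *: Psi z + (ms z * (vtx w1 - vtx w0)^*) *: Psis z).

Definition hcontour (x0 x1 y : int) : seq (edge * (int * int) * (int * int)) :=
  [seq (EH (x0 + (k : nat)%:Z) y, (x0 + (k : nat)%:Z, y), (x0 + (k : nat)%:Z + 1, y))
  | k <- iota 0 `|x1 - x0|].

Definition gamma (st : star) (y : int) :=
  match st with
  | ST => hcontour a b y
  | SL => hcontour a 0 y
  | SR => hcontour 0 b y
  end.

Definition y_range (st : star) (y : int) : bool :=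
  match st with
  | ST => 0 <= y
  | SL | SR => y <= 0
  end.

End SlitStrip.

(* Main.v *)
Require Import Defs.
From HB Require Import structures.
From mathcomp Require Import all_boot all_order all_algebra.
From mathcomp Require Import all_classical all_reals all_analysis.
From mathcomp.real_closed Require Import complex.
From mathcomp Require Import ring zify.
Import Order.TTheory GRing.Theory Num.Theory.
Local Open Scope ring_scope.
Local Open Scope complex_scope.

Lemma solve2 (F : comRingType) (u v A B c0 c1 k : F) :
  (c1 - c0) * k = 1 -> A = u - c0 * v -> B = u - c1 * v ->
  v = k * (A - B) /\ u = A + c0 * (k * (A - B)).
Proof.
move=> hk -> ->.
have e : k * (u - c0 * v - (u - c1 * v)) = v.
  by rewrite -[RHS]mul1r -hk; ring.
by rewrite e; split=> //; ring.
Qed.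


Lemma solve2p (F : comRingType) (u v A B c0 c1 k : F) :
  (c0 - c1) * k = 1 -> A = u + c0 * v -> B = u + c1 * v ->
  v = k * (A - B) /\ u = A - c0 * (k * (A - B)).
Proof.
move=> hk -> ->.
have e : k * (u + c0 * v - (u + c1 * v)) = v.
  by rewrite -[RHS]mul1r -hk; ring.
by rewrite e; split=> //; ring.
Qed.

Lemma core (F : numFieldType) (w I : F) (hwI : w ^+ 2 = I) (hI : I ^+ 2 = -1)
  (mh0 sh0 mh1 sh1 mv0 sv0 mv1 sv1 ph0 qh0 ph1 qh1 pv0 qv0 pv1 qv1 : F) :
  mh0 - (- w) * sh0 = mv0 - (- w) * sv0 ->
  mh1 - (- (I * w)) * sh1 = mv0 - (- (I * w)) * sv0 ->
  mh0 - (I * w) * sh0 = mv1 - (I * w) * sv1 ->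
  mh1 - w * sh1 = mv1 - w * sv1 ->
  ph0 + (- w) * qh0 = pv0 + (- w) * qv0 ->
  ph1 + (- (I * w)) * qh1 = pv0 + (- (I * w)) * qv0 ->
  ph0 + (I * w) * qh0 = pv1 + (I * w) * qv1 ->
  ph1 + w * qh1 = pv1 + w * qv1 ->
  mh0 * ph0 + sh0 * qh0 + (mv1 * I) * pv1 + (sv1 * (- I)) * qv1
   - (mh1 * ph1 + sh1 * qh1) - ((mv0 * I) * pv0 + (sv0 * (- I)) * qv0) = 0.
Proof.
subst I => e00 e01 e10 e11 f00 f01 f10 f11.
have hw : w ^+ 4 = -1 by rewrite -hI -exprM.
pose r := (w - w ^+ 3) / 2.
have k1 : (- (w ^+ 2 * w) - - w) * r = 1.
  by rewrite /r; field: hw.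
have [sv0E mv0E] := @solve2 _ _ _ _ _ _ _ _ k1 e00 e01.
have k2 : (w - w ^+ 2 * w) * r = 1.
  by rewrite /r; field: hw.
have [sv1E mv1E] := @solve2 _ _ _ _ _ _ _ _ k2 e10 e11.
have k3 : (- w - - (w ^+ 2 * w)) * (- r) = 1.
  by rewrite /r; field: hw.
have [qv0E pv0E] := @solve2p _ _ _ _ _ _ _ _ k3 f00 f01.
have k4 : (w ^+ 2 * w - w) * (- r) = 1.
  by rewrite /r; field: hw.
have [qv1E pv1E] := @solve2p _ _ _ _ _ _ _ _ k4 f10 f11.
rewrite mv0E mv1E pv0E pv1E sv0E sv1E qv0E qv1E /r.
by field: hw.
Qed.

Section S.
Variable R : realType.

Definition rr : R := Num.sqrt (2^-1).
Definition om : R[i] := (rr%:C) * (1 + 'i%R).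

Lemma rr2 : rr ^+ 2 = 2^-1.
Proof. by rewrite /rr sqr_sqrtr // invr_ge0. Qed.

Lemma cplx_split (u v : R) : u +i* v = u%:C + 'i%R * v%:C.
Proof. exact: (complexE (u +i* v)). Qed.

Lemma aux_div (u v : R) (T : R[i]) : u +i* v != 0 ->
  'i%R * rr%:C = T * (u%:C + 'i%R * v%:C) -> 'i%R * rr%:C / (u +i* v) = T.
Proof. by move=> dn h; apply: (mulIf dn); rewrite mulfVK // cplx_split. Qed.

Lemma half_neq0 : (2^-1 : R) != 0.
Proof. by rewrite invr_eq0 pnatr_eq0. Qed.

Lemma one_half : (1 - 2^-1 : R) = 2^-1.
Proof. by field. Qed.

Lemma cfac_val x y (dx dy : bool) :
  cfac R x y dx dy = if dx then (if dy then om else 'i%R * om)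
                     else (if dy then - ('i%R * om) else - om).
Proof.
rewrite /cfac /vtx /cpt /=.
rewrite -[(_ +i* _) - (_ +i* _)]/(_ +i* _).
have hd (z : int) (d : bool) : (z + d%:Z)%:~R - (z%:~R + 1 / 2) = (d%:R - 2^-1 : R).
  rewrite intrD /=; case: d => /=; rewrite ?intr1 ?mulr1n ?mulr0n ?addr0; field. all: try by [].
rewrite !hd normc_def /=.
have hn (d1 d2 : bool) : (d1%:R - 2^-1) ^+ 2 + (d2%:R - 2^-1) ^+ 2 = 2^-1 :> R.
  by case: d1; case: d2 => /=; field.
rewrite hn -/rr.
case: dx; case: dy => /=; rewrite ?mulr1n ?mulr0n ?sub0r ?one_half;
  (apply: aux_div; [by rewrite eq_complex /= negb_and ?oppr_eq0 half_neq0|]);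
  rewrite /om ?rmorphN fmorphV rmorph_nat.
all: have iE : (Complex 0 1 : R[i]) = Num.imaginary := erefl.
all: have hI : (Num.imaginary : R[i]) ^+ 2 = -1 := sqrCi _.
all: rewrite ?iE; field: hI. all: try by []. 
Qed.
Lemma om2 : om ^+ 2 = 'i%R.
Proof.
have hI : (Num.imaginary : R[i]) ^+ 2 = -1 := sqrCi _.
rewrite /om exprMn -rmorphXn /= rr2 fmorphV rmorph_nat.
by field: hI.
Qed.

Definition Eterm {n : nat} (mz sz dz : R[i]) (P Q : 'M[R[i]]_n) : 'M[R[i]]_n :=
  (mz * dz) *: P + (sz * dz^*) *: Q.

Lemma face_mat (n : nat) (mh0 sh0 mh1 sh1 mv0 sv0 mv1 sv1 : R[i])
  (Ph0 Qh0 Ph1 Qh1 Pv0 Qv0 Pv1 Qv1 : 'M[R[i]]_n) :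
  mh0 - (- om) * sh0 = mv0 - (- om) * sv0 ->
  mh1 - (- ('i%R * om)) * sh1 = mv0 - (- ('i%R * om)) * sv0 ->
  mh0 - ('i%R * om) * sh0 = mv1 - ('i%R * om) * sv1 ->
  mh1 - om * sh1 = mv1 - om * sv1 ->
  Ph0 + (- om) *: Qh0 = Pv0 + (- om) *: Qv0 ->
  Ph1 + (- ('i%R * om)) *: Qh1 = Pv0 + (- ('i%R * om)) *: Qv0 ->
  Ph0 + ('i%R * om) *: Qh0 = Pv1 + ('i%R * om) *: Qv1 ->
  Ph1 + om *: Qh1 = Pv1 + om *: Qv1 ->
  Eterm mh0 sh0 1 Ph0 Qh0 + Eterm mv1 sv1 'i%R Pv1 Qv1 =
  Eterm mh1 sh1 1 Ph1 Qh1 + Eterm mv0 sv0 'i%R Pv0 Qv0.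
Proof.
move=> e00 e01 e10 e11 f00 f01 f10 f11.
have hI : (Num.imaginary : R[i]) ^+ 2 = -1 := sqrCi _.
apply/matrixP => i j.
have g00 := congr1 (fun M : 'M[R[i]]_n => M i j) f00.
have g01 := congr1 (fun M : 'M[R[i]]_n => M i j) f01.
have g10 := congr1 (fun M : 'M[R[i]]_n => M i j) f10.
have g11 := congr1 (fun M : 'M[R[i]]_n => M i j) f11.
move: g00 g01 g10 g11 => /=; rewrite !mxE => g00 g01 g10 g11.
have H := @core _ _ _ om2 hI _ _ _ _ _ _ _ _ _ _ _ _ _ _ _ _ e00 e01 e10 e11 g00 g01 g10 g11.
rewrite /Eterm ?mxE conjC1 conjCi.
apply/eqP; rewrite -subr_eq0; apply/eqP; rewrite -[RHS]H; ring.
Qed.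

End S.

Lemma telesc (V : zmodType) (n : nat) (A B f g : nat -> V) :
  (forall k, (k < n)%N -> A k + g k = B k + f k) ->
  (forall k, (k.+1 < n)%N -> g k = f k.+1) ->
  f 0%N = 0 -> g n.-1 = 0 -> (0 < n)%N ->
  \sum_(0 <= k < n) A k = \sum_(0 <= k < n) B k.
Proof.
move=> hAB hgf hf0 hg hn.
suff H : forall n', (0 < n')%N -> (n' <= n)%N ->
  \sum_(0 <= k < n') A k + g n'.-1 = \sum_(0 <= k < n') B k + f 0%N.
  by have := H n hn (leqnn n); rewrite hf0 hg !addr0.
elim=> [//|n' IH] _ hle.
case: n' IH hle => [|n'] IH hle.
  by rewrite !big_nat1 hAB.
rewrite big_nat_recr //= [in RHS]big_nat_recr //=.
rewrite -addrA hAB //.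
rewrite addrA -(hgf n') //.
have IH2 := IH isT (ltnW hle); rewrite /= in IH2.
by rewrite -addrA [B _ + _]addrC addrA IH2 -!addrA [f 0%N + _]addrC.
Qed.

Section Main.
Variables (R : realType) (a b : int) (Psi Psis : edge -> Mat R a b) (m ms : edge -> R[i]).

Definition HE (x y : int) := Eterm R (m (EH x y)) (ms (EH x y)) 1 (Psi (EH x y)) (Psis (EH x y)).
Definition VE (z : edge) := Eterm R (m z) (ms z) 'i%R (Psi z) (Psis z).
Definition Hrow (x0 : int) (n : nat) (y : int) := \sum_(0 <= k < n) HE (x0 + k%:Z) y.

Lemma hcont x0 x1 y :
  contour_integral m ms Psi Psis (hcontour x0 x1 y) = Hrow x0 `|x1 - x0| y.
Proof.
rewrite /contour_integral /hcontour big_map /Hrow /index_iota subn0.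
apply: eq_bigr => k _.
have d1 : vtx R (x0 + k%:Z + 1, y) - vtx R (x0 + k%:Z, y) = 1.
  rewrite /vtx /cpt /=.
  rewrite -[(_ +i* _) - (_ +i* _)]/(_ +i* _).
  apply/eqP; rewrite eq_complex /=; apply/andP; split; apply/eqP.
    rewrite intrD; ring.
  by rewrite subrr.
by rewrite d1.
Qed.

Lemma fhF x y : face_hedge x y false = EH x y.
Proof. by rewrite /face_hedge; congr EH; exact: addr0. Qed.

Lemma fhT x y : face_hedge x y true = EH x (y + 1).
Proof. by []. Qed.

Lemma fv_EV x y (r : bool) : ~~ (((if r then x + 1 else x) == 0) && (y < 0)) ->
  face_vedge x y r = EV (if r then x + 1 else x) y.
Proof. by rewrite /face_vedge => /negbTE ->. Qed.

Lemma fv_ESl x y (r : bool) : ((if r then x + 1 else x) == 0) -> y < 0 ->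
  face_vedge x y r = ESl (~~ r) y.
Proof. by rewrite /face_vedge => -> ->. Qed.

Lemma face_step st x y :
  is_fermion_pair Psi Psis -> ICSH a b st m ms -> a <= x < b -> faceS a b st x y ->
  inS a b st (EH x y) -> inS a b st (EH x (y + 1)) ->
  inS a b st (face_vedge x y false) -> inS a b st (face_vedge x y true) ->
  HE x y + VE (face_vedge x y true) = HE x (y + 1) + VE (face_vedge x y false).
Proof.
case=> _ _ Hf _ _ HS hx hf i0 i1 j0 j1.
rewrite /HE /VE; apply: face_mat.
- by have := HS x y false false hf; cbv zeta; rewrite cfac_val fhF; apply.
- by have := HS x y false true hf; cbv zeta; rewrite cfac_val fhT; apply.
- by have := HS x y true false hf; cbv zeta; rewrite cfac_val fhF; apply.
- by have := HS x y true true hf; cbv zeta; rewrite cfac_val fhT; apply.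
- by have := Hf x y false false hx; cbv zeta; rewrite cfac_val fhF.
- by have := Hf x y false true hx; cbv zeta; rewrite cfac_val fhT.
- by have := Hf x y true false hx; cbv zeta; rewrite cfac_val fhF.
- by have := Hf x y true true hx; cbv zeta; rewrite cfac_val fhT.
Qed.

Lemma VE_left z : Psi z + 'i%R *: Psis z = 0 -> m z - 'i%R * ms z = 0 -> VE z = 0.
Proof.
move=> hP hm.
have hI : (Num.imaginary : R[i]) ^+ 2 = -1 := sqrCi _.
have hP' : Psi z = - ('i%R *: Psis z) by apply/eqP; rewrite -addr_eq0 hP.
have hm' : m z = 'i%R * ms z by apply/eqP; rewrite -subr_eq0 hm.
rewrite /VE /Eterm hP' hm' conjCi; apply/matrixP => i j; rewrite !mxE.
ring: hI.
Qed.

Lemma VE_right z : Psi z - 'i%R *: Psis z = 0 -> m z + 'i%R * ms z = 0 -> VE z = 0.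
Proof.
move=> hP hm.
have hI : (Num.imaginary : R[i]) ^+ 2 = -1 := sqrCi _.
have hP' : Psi z = 'i%R *: Psis z by apply/eqP; rewrite -subr_eq0 hP.
have hm' : m z = - ('i%R * ms z) by apply/eqP; rewrite -addr_eq0 hm.
rewrite /VE /Eterm hP' hm' conjCi; apply/matrixP => i j; rewrite !mxE.
ring: hI.
Qed.

Lemma row_eq st (x0 : int) (n : nat) (y : int) :
  is_fermion_pair Psi Psis -> ICSH a b st m ms -> (0 < n)%N ->
  (forall k, (k < n)%N -> let x := x0 + k%:Z in
     (a <= x < b) /\ faceS a b st x y /\ inS a b st (EH x y) /\ inS a b st (EH x (y + 1)) /\
         inS a b st (face_vedge x y false) /\ inS a b st (face_vedge x y true)) ->
  (forall k, (k.+1 < n)%N -> face_vedge (x0 + k%:Z) y true = face_vedge (x0 + k.+1%:Z) y false) ->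
  VE (face_vedge x0 y false) = 0 -> VE (face_vedge (x0 + (n.-1)%:Z) y true) = 0 ->
  Hrow x0 n y = Hrow x0 n (y + 1).
Proof.
move=> HF HS hn hk hv hl hr.
rewrite /Hrow.
apply: (@telesc _ n (fun k => HE (x0 + k%:Z) y) (fun k => HE (x0 + k%:Z) (y + 1))
  (fun k => VE (face_vedge (x0 + k%:Z) y false))
  (fun k => VE (face_vedge (x0 + k%:Z) y true))).
- move=> k /hk /= [h1 [h2 [h3 [h4 [h5 h6]]]]].
  exact: (face_step _ _ _ HF HS h1 h2 h3 h4 h5 h6).
- by move=> k /hv /= ->.
- by have -> : x0 + (0%N)%:Z = x0 by exact: addr0.
- exact: hr.
- exact: hn.
Qed.

Lemma rowT (y : int) : is_fermion_pair Psi Psis -> ICSH a b ST m ms -> ICRBV a b ST m ms ->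
  a < 0 -> 0 < b -> 0 <= y ->
  Hrow a `|b - a| y = Hrow a `|b - a| (y + 1).
Proof.
move=> HF HS [BL BR] ha hb hy.
have HF' := HF; case: HF' => _ _ _ [HL1 HL2] [HR1 HR2].
apply: (row_eq _ _ _ _ HF HS).
- lia.
- move=> k hk /=.
  rewrite fv_EV; last by lia.
  rewrite fv_EV; last by lia.
  cbv beta iota delta [faceS inS].
  lia.
- move=> k hk; rewrite !fv_EV; try lia.
  cbv iota; congr EV; lia.
- rewrite fv_EV; last by lia.
  apply: VE_left; first exact: HL1.
  by apply: BL; cbv beta iota delta [left_bdry]; lia.
- rewrite fv_EV; last by lia.
  have -> : (if true then a + (`|b - a|.-1)%N%:Z + 1 else a + (`|b - a|.-1)%N%:Z) = b by lia.
  apply: VE_right; first exact: HR1.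
  by apply: BR; cbv beta iota delta [right_bdry]; lia.
Qed.

Lemma rowL (y : int) : is_fermion_pair Psi Psis -> ICSH a b SL m ms -> ICRBV a b SL m ms ->
  a < 0 -> 0 < b -> y < 0 ->
  Hrow a `|0 - a| y = Hrow a `|0 - a| (y + 1).
Proof.
move=> HF HS [BL BR] ha hb hy.
have HF' := HF; case: HF' => _ _ _ [HL1 HL2] [HR1 HR2].
apply: (row_eq _ _ _ _ HF HS).
- lia.
- move=> k hk /=.
  rewrite fv_EV; last by lia.
  case: (boolP (a + k%:Z + 1 == 0)) => h0.
    rewrite (fv_ESl _ _ true h0 hy).
    cbv beta iota delta [faceS inS].
    lia.
  rewrite fv_EV; last by lia.
  cbv beta iota delta [faceS inS].
  lia.
- move=> k hk; rewrite !fv_EV; try lia.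
  cbv iota; congr EV; lia.
- rewrite fv_EV; last by lia.
  apply: VE_left; first exact: HL1.
  by apply: BL; cbv beta iota delta [left_bdry]; lia.
- have h0 : a + (`|0 - a|.-1)%N%:Z + 1 == 0 by lia.
  rewrite (fv_ESl _ _ true h0 hy).
  apply: VE_right; first exact: HR2.
  by apply: BR; cbv beta iota delta [right_bdry]; lia.
Qed.

Lemma rowR (y : int) : is_fermion_pair Psi Psis -> ICSH a b SR m ms -> ICRBV a b SR m ms ->
  a < 0 -> 0 < b -> y < 0 ->
  Hrow 0 `|b - 0| y = Hrow 0 `|b - 0| (y + 1).
Proof.
move=> HF HS [BL BR] ha hb hy.
have HF' := HF; case: HF' => _ _ _ [HL1 HL2] [HR1 HR2].
apply: (row_eq _ _ _ _ HF HS).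
- lia.
- move=> k hk /=.
  rewrite [face_vedge _ y true]fv_EV; last by lia.
  case: (boolP (0 + k%:Z == 0)) => h0.
    rewrite (fv_ESl _ _ false h0 hy).
    cbv beta iota delta [faceS inS].
    lia.
  rewrite fv_EV; last by lia.
  cbv beta iota delta [faceS inS].
  lia.
- move=> k hk; rewrite !fv_EV; try lia.
  cbv iota; congr EV; lia.
- have h0 : (0 : int) == 0 by [].
  rewrite (fv_ESl _ _ false h0 hy).
  apply: VE_left; first exact: HL2.
  by apply: BL; cbv beta iota delta [left_bdry]; lia.
- rewrite fv_EV; last by lia.
  have -> : (if true then 0 + (`|b - 0|.-1)%N%:Z + 1 else 0 + (`|b - 0|.-1)%N%:Z) = b by lia.
  apply: VE_right; first exact: HR1.
  by apply: BR; cbv beta iota delta [right_bdry]; lia.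
Qed.

End Main.

Theorem proposition3p20 (R : realType) (a b : int) (ha : a < 0) (hb : 0 < b)
    (Psi Psis : edge -> Mat R a b) :
  is_fermion_pair Psi Psis ->
  forall (st : star) (m ms : edge -> R[i]),
    ICSH a b st m ms -> ICRBV a b st m ms ->
    forall y : int, y_range st y ->
      contour_integral m ms Psi Psis (gamma a b st y) =
      contour_integral m ms Psi Psis (gamma a b st 0).
Proof.
move=> HF st m ms HS HB y hy.
case: st HS HB hy => HS HB hy; cbv beta iota delta [gamma y_range] in hy |- *; rewrite !hcont.
- case: y hy => [n|n] hy; last by [].
  elim: n {hy} => [//|n IH].
  have e : Posz n.+1 = Posz n + 1 by lia.
  by rewrite e -(rowT _ _ _ _ _ _ _ _ HF HS HB ha hb) // IH.
- have [n ->] : exists n : nat, y = - n%:Z by exists `|y|%N; lia.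
  elim: n {hy} => [//|n IH].
  have e : - (n%:Z) = - (n.+1)%:Z + 1 by lia.
  rewrite -IH e -(rowL _ _ _ _ _ _ _ _ HF HS HB ha hb) //; lia.
- have [n ->] : exists n : nat, y = - n%:Z by exists `|y|%N; lia.
  elim: n {hy} => [//|n IH].
  have e : - (n%:Z) = - (n.+1)%:Z + 1 by lia.
  rewrite -IH e -(rowR _ _ _ _ _ _ _ _ HF HS HB ha hb) //; lia.
Qed.
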